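(* Let $p\ge 5$ be a prime and $k$ an integer with $1\le k\le \frac{p-3}{2}$, and put $t=p-1-2k$. Then, modulo $p$, \[ (-1)^k 4^{2k-1} E_t \equiv 4^t S_t(0, \tfrac{1}{16}) + 2^t S_t(\tfrac{3}{8}, \tfrac{7}{16}) + (2^t + 4^t) S_t(\tfrac{7}{16}, \tfrac{1}{2}). \]
   Context: $E_n$ denotes the $n$th Euler number, defined by $\sec z=\sum_{n\ge0}E_n\frac{z^n}{n!}$ (so $E_2=1$, $E_4=5$). For a prime $p$, an integer $\ell$ and real numbers $0\le x<y\le 1$, $S_\ell(x,y)=\sum_{xp<s<yp} s^\ell$, the sum over integers $s$ strictly between $xp$ and $yp$. Congruences between rational numbers modulo $p$ mean that the difference has $p$-adic valuation at least $1$. *)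

(* Defs.v *)
From mathcomp Require Import all_boot all_order all_algebra.
Set Implicit Arguments. Unset Strict Implicit. Unset Printing Implicit Defensive.
Import Order.TTheory GRing.Theory Num.Theory.
Local Open Scope ring_scope.

(* Euler numbers via sec z = sum E_n z^n / n!, i.e. cos z * sec z = 1:
   sum_{j=0}^{n/2} (-1)^j C(n,2j) E_{n-2j} = [n == 0]. *)
Definition euler_next (n : nat) (s : seq int) : int :=
  \sum_(1 <= j < n./2.+1) (-1) ^+ j.+1 * ('C(n, j.*2))%:Z * nth 0 s (n - j.*2).

Fixpoint eulers (n : nat) : seq int :=
  match n with
  | 0 => [:: 1]
  | m.+1 => let s := eulers m in rcons s (euler_next m.+1 s)
  end.

Definition euler (n : nat) : int := nth 0 (eulers n) n.

(* S_l(x,y) = sum over integers s with x p < s < y p of s^l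
   (for 0 <= x < y <= 1 all such s lie in [0, p]). *)
Definition Ssum (p l : nat) (x y : rat) : int :=
  \sum_(0 <= s < p.+1 | (x * p%:R < s%:R) && (s%:R < y * p%:R)) (s%:Z) ^+ l.




Lemma euler_3 : euler 3 = 0. Proof. by rewrite /euler /= /euler_next !unlock. Qed.
Lemma euler_4 : euler 4 = 5. Proof. by rewrite /euler /= /euler_next !unlock. Qed.
Lemma euler_6 : euler 6 = 61. Proof. by rewrite /euler /= /euler_next !unlock. Qed.

(* Main.v *)
Require Import Defs.
From mathcomp Require Import all_boot all_order all_algebra zify ring lra.
Set Implicit Arguments. Unset Strict Implicit. Unset Printing Implicit Defensive.
Import Order.TTheory GRing.Theory Num.Theory.
Local Open Scope ring_scope.

Lemma size_eulers n : size (eulers n) = n.+1.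
Proof. by elim: n => [|n IH] //=; rewrite size_rcons IH. Qed.

Lemma nth_eulers n i : (i <= n)%N -> nth 0 (eulers n) i = euler i.
Proof.
elim: n => [|n IH]; first by rewrite leqn0 => /eqP ->.
rewrite leq_eqVlt => /orP [/eqP -> //| hi].
by rewrite /= nth_rcons size_eulers hi IH.
Qed.

Lemma euler_rec n : euler n.+1 =
  \sum_(1 <= j < n.+1./2.+1) (-1) ^+ j.+1 * ('C(n.+1, j.*2))%:Z * euler (n.+1 - j.*2).
Proof.
rewrite /euler /= nth_rcons size_eulers ltnn eqxx /euler_next.
apply: eq_big_nat => j /andP [hj1 hj2]; rewrite nth_eulers //.
by case: j hj1 hj2 => // j _ _; rewrite doubleS !subSS leq_subr.
Qed.

Section InK.
Variable K : fieldType.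
Variable p : nat.
Hypothesis hp : p \in [pchar K].

Lemma natK0 n : ((n%:R : K) == 0) = (p %| n)%N.
Proof. by rewrite (dvdn_pcharf hp). Qed.

Lemma pK0 : (p%:R : K) = 0.
Proof. by apply/eqP; rewrite natK0. Qed.

Lemma psum0 n : (n.+1 < p)%N -> \sum_(0 <= s < p) (s%:R : K) ^+ n = 0.
Proof.
elim/ltn_ind: n => n IH hn.
have tel : \sum_(0 <= s < p) ((s.+1%:R : K) ^+ n.+1 - (s%:R) ^+ n.+1) = 0.
  by rewrite telescope_sumr // pK0 !expr0n /= mulr0n subrr.

have e : forall s : nat, (s.+1%:R : K) ^+ n.+1 - (s%:R) ^+ n.+1
      = \sum_(i < n.+1) (s%:R : K) ^+ i *+ 'C(n.+1, i).
  move=> s; rewrite -natr1 exprD1n big_ord_recr /= binn mulr1n addrK.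
by apply: eq_bigr.

rewrite (eq_bigr _ (fun s _ => e s)) exchange_big /= big_ord_recr /= in tel.
rewrite big1 ?add0r in tel; last first.
  move=> i _; rewrite sumrMnl.
  have hi : (i < n)%N by [].
  rewrite IH ?mul0rn //; lia.
move: tel; rewrite sumrMnl binSn -mulr_natl => /eqP; rewrite mulf_eq0 natK0.
case/orP=> [hd|/eqP //].
have := dvdn_leq (ltn0Sn n) hd; lia.
Qed.

Lemma split_eo (g : nat -> K) h :
  \sum_(0 <= k < h.*2.+1) g k =
  \sum_(0 <= j < h.+1) g j.*2 + \sum_(0 <= j < h) g j.*2.+1.
Proof.
elim: h => [|h IH]; first by rewrite big_nat1 [X in _ = _ + X]big_geq // addr0 big_nat1.
rewrite doubleS (big_nat_recr (h.*2.+2)) // (big_nat_recr (h.*2.+1)) // IH.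
rewrite (big_nat_recr h.+1) // (big_nat_recr h) //=.
rewrite doubleS; set a := \sum_(0 <= j < h.+1) _; set b := \sum_(0 <= j < h) _.
rewrite /a big_nat_recr //=; ring.
Qed.

Lemma sign2 h : (-1 : K) ^+ h.*2 = 1.
Proof. by rewrite -mul2n mulnC exprM sqrr_sign. Qed.

Lemma binom_even (y : K) h :
  \sum_(0 <= j < h.+1) ('C(h.*2, j.*2))%:R * y ^+ (h.*2 - j.*2) * 2 =
  (y + 1) ^+ h.*2 + (y - 1) ^+ h.*2.
Proof.
have e1 : (y - 1) ^+ h.*2 = (- y + 1) ^+ h.*2.
  by rewrite -(opprB 1 y) exprNn sign2 mul1r addrC.
rewrite e1 !exprD1n -big_split /=.
rewrite -(big_mkord xpredT (fun k => y ^+ k *+ 'C(h.*2, k) + (- y) ^+ k *+ 'C(h.*2, k))).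
rewrite split_eo [X in _ = _ + X]big1_seq ?addr0; last first.
  by move=> j _; rewrite exprNn -signr_odd /= odd_double /= expr1 mulN1r mulNrn addrN.
rewrite big_nat_rev /=; apply: eq_big_nat => j /andP [_ hj].
rewrite add0n subSS.
have -> : ((h - j).*2 = h.*2 - j.*2)%N by rewrite doubleB.
have hj' : (j.*2 <= h.*2)%N by rewrite leq_double -ltnS.
have -> : (h.*2 - (h.*2 - j.*2) = j.*2)%N by rewrite subKn.
rewrite bin_sub // exprNn sign2 mul1r -mulr2n mulr_natr -mulrnA.
by rewrite mulrnA mulr_natl.
Qed.

Variable m : nat.
Hypothesis hpm : p = m.*2.+1.

Lemma m2K : ((m.*2)%:R : K) = -1.
Proof. by apply/eqP; rewrite -subr_eq0 opprK natr1 -hpm pK0. Qed.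

Lemma nat2 k : ((k.*2)%:R : K) = 2 * k%:R.
Proof. by rewrite -mul2n natrM. Qed.

Definition Aa n := \sum_(0 <= i < m) (-1) ^+ i * (((i.*2.+1)%:R : K) ^+ n).

Lemma Aa0 : 2 * Aa 0 = 1 - (-1) ^+ m.
Proof.
rewrite /Aa mulr_sumr.
rewrite (telescope_sumr_eq (fun k => - (-1) ^+ k : K)) //; last first.
  by move=> k _; rewrite expr0 mulr1 exprS; ring.
by rewrite expr0 opprK addrC.
Qed.

Lemma core h : (0 < h)%N ->
  2 * \sum_(0 <= j < h.+1) ('C(h.*2, j.*2))%:R * Aa (h.*2 - j.*2) = - (-1) ^+ m.
Proof.
move=> h0.
rewrite mulr_sumr.
under eq_bigr => j _ do rewrite /Aa mulr_sumr mulr_sumr.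
rewrite exchange_big /=.
transitivity (\sum_(0 <= i < m) (-1) ^+ i *
   ((((i.*2.+1)%:R : K) + 1) ^+ h.*2 + ((i.*2.+1)%:R - 1) ^+ h.*2)).
  apply: eq_bigr => i _; rewrite -binom_even mulr_sumr; apply: eq_bigr => j _; ring.
rewrite (telescope_sumr_eq (fun k => - ((-1) ^+ k * ((k.*2)%:R : K) ^+ h.*2))) //; last first.
  move=> k _.
  have -> : ((k.*2.+1)%:R + 1 : K) = ((k.+1).*2)%:R by rewrite natr1.
  have -> : ((k.*2.+1)%:R - 1 : K) = (k.*2)%:R by rewrite -natr1 addrK.
  rewrite exprS; ring.
rewrite m2K sign2 mulr1 expr0n /=.
case: h h0 => // h _; rewrite mulr0 oppr0 subr0 //.
Qed.

Lemma euler_K h : (0 < h)%N -> ((euler h.*2)%:~R : K) = 2 * (-1) ^+ h * Aa h.*2.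
Proof.
elim/ltn_ind: h => h IH h0.
case: h IH h0 => // h1 IH _.
have E : (h1.+1.*2 = (h1.*2.+1).+1)%N by [].
rewrite E euler_rec -E doubleK.
rewrite rmorph_sum /=.
rewrite big_nat_recr //= doubleS subnn.
set Y := \sum_(1 <= j < h1.+1) ('C(h1.+1.*2, j.*2))%:R * Aa (h1.+1.*2 - j.*2).
have hS : \sum_(1 <= i < h1.+1)
    ((-1) ^+ i.+1 * ('C(h1.*2.+2, i.*2))%:Z * euler (h1.*2.+2 - i.*2))%:~R
    = - (2 * (-1) ^+ h1.+1 * Y) :> K.
  rewrite /Y mulr_sumr -sumrN; apply: eq_big_nat => j /andP [hj1 hj2].
  rewrite !rmorphM /= rmorph_sign /=.
  rewrite (_ : ((('C(h1.*2.+2, j.*2))%:Z)%:~R : K) = ('C(h1.*2.+2, j.*2))%:R) //.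
  have -> : (h1.*2.+2 - j.*2 = (h1.+1 - j).*2)%N by rewrite doubleB.
  rewrite IH; [|lia|lia].
  have -> : ((h1.+1 - j).*2 = h1.+1.*2 - j.*2)%N by rewrite doubleB.
  have -> : ((-1) ^+ j.+1 : K) = - (-1) ^+ h1.+1 * (-1) ^+ (h1.+1 - j).
    rewrite -signr_odd -[X in _ = - X * _]signr_odd -[X in _ = _ * X]signr_odd.
    rewrite oddB; last lia.
    by rewrite /=; case: (odd j); case: (odd h1) => /=; ring.
  rewrite -E -[(-1) ^+ (h1.+1 - j)]signr_odd; set t := (-1) ^+ h1.+1.
  by case: odd => /=; ring.
rewrite hS.
have hc := core (ltn0Sn h1).
rewrite big_ltn // big_nat_recr //= subn0 bin0 subnn binn in hc.
rewrite -/Y ?mulr1n ?mul1r in hc.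
have A0 := Aa0.
have hY : 2 * Y = -1 - 2 * Aa (h1.+1.*2).
  rewrite (_ : 2 * Y = 2 * (Aa h1.+1.*2 + (Y + Aa 0)) - 2 * Aa h1.+1.*2 - 2 * Aa 0); last by ring.
  by rewrite hc A0; ring.
rewrite binn (_ : euler 0 = 1) // !mulr1 rmorphXn rmorphN1 -E.
rewrite (exprS _ h1.+1); set t := (-1) ^+ h1.+1.
have -> : 2 * t * Y = t * (2 * Y) by ring.
rewrite hY; ring.
Qed.

Lemma split2 (g : nat -> K) N :
  \sum_(0 <= k < N.*2) g k = \sum_(0 <= j < N) g j.*2 + \sum_(0 <= j < N) g j.*2.+1.
Proof.
elim: N => [|N IH]; first by rewrite !big_geq ?addr0.
rewrite doubleS (big_nat_recr N.*2.+1) // (big_nat_recr N.*2) // IH.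
rewrite (big_nat_recr N 0 (fun j => g j.*2)) // (big_nat_recr N 0 (fun j => g j.*2.+1)) //=; ring.
Qed.

Lemma widen (G : nat -> K) a b : (a <= b)%N ->
  \sum_(0 <= j < a) G j = \sum_(0 <= j < b) (if (j < a)%N then G j else 0).
Proof.
move=> hab; rewrite (@big_cat_nat _ _ _ a 0 b _ _ (leq0n a) hab) /= [X in _ = _ + X]big1_seq ?addr0.
  by apply: eq_big_nat => j /andP [_ ->].
move=> j; rewrite mem_index_iota => /andP [_ /andP [ha _]]; case: ifP => // hj; lia.
Qed.

Variable h : nat.
Hypothesis h0 : (0 < h)%N.

Definition f s := ((s%:R : K) ^+ h.*2).
Definition c : K := 2 ^+ h.*2.

Lemma f0 : f 0 = 0.
Proof. by rewrite /f expr0n double_eq0 eqn0Ngt h0. Qed.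

Lemma fN s : (s <= p)%N -> f (p - s) = f s.
Proof. by move=> hs; rewrite /f natrB // pK0 sub0r exprNn sign2 mul1r. Qed.

Lemma f2 s : f s.*2 = c * f s.
Proof. by rewrite /f nat2 exprMn. Qed.

Definition Fk (P : nat -> bool) := \sum_(0 <= s < p.+1) (if P s then f s else 0).

Lemma Fk_ext P Q : (forall s, (0 < s)%N -> (s <= p)%N -> P s = Q s) -> Fk P = Fk Q.
Proof.
move=> hPQ; apply: eq_big_nat => s /andP [_ hs].
case: s hs => [|s] hs; first by rewrite f0; case: (P 0); case: (Q 0).
by rewrite hPQ.
Qed.

Lemma doubling P :
  Fk P = c * (Fk (fun j => (j <= m)%N && P j.*2) + Fk (fun j => (j <= m)%N && P (p - j.*2)%N)).
Proof.
have e : p.+1 = (m.+1).*2 by rewrite hpm.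
rewrite /Fk {1}e split2 [X in _ + X = _]big_nat_rev /= add0n.
have e2 : forall j, (0 <= j < m.+1)%N ->
  (if P (m.+1 - j.+1).*2.+1 then f (m.+1 - j.+1).*2.+1 else 0)
  = (if P (p - j.*2)%N then c * f j else 0).
  move=> j /andP [_ hj]; have -> : ((m.+1 - j.+1).*2.+1 = p - j.*2)%N.
    rewrite hpm subSS doubleB subSn //; rewrite leq_double; lia.
  by rewrite fN ?f2 //; lia.
rewrite (eq_big_nat _ _ e2).
have e1 : forall j, (0 <= j < m.+1)%N ->
  (if P j.*2 then f j.*2 else 0) = (if P j.*2 then c * f j else 0).
  by move=> j _; rewrite f2.
rewrite (eq_big_nat _ _ e1).
have hm : (m.+1 <= p.+1)%N by rewrite hpm; lia.
rewrite (widen _ hm) (widen (fun j => if P (p - j.*2)%N then c * f j else 0) hm).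
rewrite mulrDr !mulr_sumr; congr (_ + _); apply: eq_bigr => j _;
  rewrite ltnS; case: (j <= m)%N => /=; try by rewrite mulr0.
  by case: (P _); rewrite ?mulr0.
by case: (P _); rewrite ?mulr0.
Qed.

Definition Bk := \sum_(0 <= j < m.+1) (-1) ^+ j * f j.

Lemma P3 : Aa h.*2 = (-1) ^+ m * c * Bk.
Proof.
rewrite /Aa /Bk big_nat_rev /= add0n big_nat_recl // f0 mulr0 add0r mulr_sumr.
apply: eq_big_nat => i /andP [_ hi].
have -> : ((m - i.+1).*2.+1 = p - (i.+1).*2)%N.
  rewrite hpm -!mul2n; lia.
rewrite -/(f (p - (i.+1).*2)) fN; last by rewrite hpm -!mul2n; lia.
rewrite f2.
have -> : ((-1) ^+ (m - i.+1) : K) = (-1) ^+ m * (-1) ^+ i.+1.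
  rewrite -signr_odd -[X in _ = X * _]signr_odd -[X in _ = _ * X]signr_odd.
  have -> : m = (m - i.+1 + i.+1)%N by rewrite subnK.
  rewrite addnK oddD; case: (odd (m - i.+1)); case: (odd i.+1) => /=; ring.
ring.
Qed.

Lemma Fk_add P Q R : (forall s, (0 < s)%N -> (s <= p)%N -> R s = P s || Q s) ->
  (forall s, (0 < s)%N -> (s <= p)%N -> ~~ (P s && Q s)) -> Fk R = Fk P + Fk Q.
Proof.
move=> hR hPQ; rewrite /Fk -big_split /=; apply: eq_big_nat => s /andP [_ hs].
case: s hs => [|s] hs; first by rewrite f0; case: (R 0); case: (P 0); case: (Q 0); rewrite ?addr0.
rewrite hR //; move: (hPQ s.+1 isT hs).
by case: (P s.+1); case: (Q s.+1) => //=; rewrite ?addr0 ?add0r.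
Qed.

Lemma Fk_false P : (forall s, (0 < s)%N -> (s <= p)%N -> P s = false) -> Fk P = 0.
Proof.
move=> hP; rewrite (@Fk_ext P (fun _ => false)) //.
by rewrite /Fk big1.
Qed.

Lemma two_neq0 : (2 : K) != 0.
Proof.
rewrite natK0; apply/negP => hd.
have h1 := dvdn_leq (ltn0Sn 1) hd.
have h2 := prime_gt1 (pcharf_prime hp).
move: hpm h1 h2; rewrite -mul2n; lia.
Qed.

Hypothesis ht : (h.*2.+1 < p)%N.

Lemma c_neq0 : c != 0.
Proof. by rewrite /c expf_neq0 // two_neq0. Qed.

Lemma Fk_true : Fk (fun _ => true) = 0.
Proof.
rewrite /Fk big_nat_recr //= (psum0 ht) add0r /f pK0 expr0n double_eq0 eqn0Ngt h0.
by [].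
Qed.

Lemma Fk_half : Fk (fun j => (j <= m)%N) = 0.
Proof.
have := Fk_true; rewrite doubling.
rewrite (@Fk_ext (fun j => (j <= m)%N && true) (fun j => (j <= m)%N)); last by move=> s _ _; rewrite andbT.
move/eqP; rewrite mulf_eq0 (negbTE c_neq0) /= -mulr2n -mulr_natl mulf_eq0.
by rewrite (negbTE two_neq0) /= => /eqP.
Qed.

Lemma P4 : Bk = 2 * c * Fk (fun j => (j.*2 <= m)%N).
Proof.
have hm : (m.+1 <= p.+1)%N by rewrite hpm; lia.
rewrite /Bk (widen _ hm).
transitivity (2 * Fk (fun j => (j <= m)%N && ~~ odd j) - Fk (fun j => (j <= m)%N)).
  rewrite /Fk mulr_sumr -sumrB; apply: eq_bigr => j _; rewrite ltnS.
  case: (j <= m)%N => /=; last by rewrite mulr0 subr0.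
  rewrite -signr_odd; case: (odd j) => /=; ring.
rewrite Fk_half subr0 doubling.
rewrite (@Fk_false (fun j => (j <= m)%N && (((p - j.*2)%N <= m)%N && ~~ odd (p - j.*2)%N))); last first.
  move=> s _ _; case hs: (s <= m)%N => //=.
  have -> : (p - s.*2 = (m - s).*2.+1)%N by rewrite hpm -!mul2n; lia.
  by rewrite /= odd_double andbF.
rewrite addr0 (@Fk_ext _ (fun j => (j.*2 <= m)%N)); first by ring.
move=> s _ _; rewrite odd_double andbT.
case hs: (s.*2 <= m)%N; last by rewrite andbF.
by rewrite andbT; move: hs; rewrite -!mul2n; lia.
Qed.

Lemma fermat2 : (2 : K) ^+ (m.*2) = 1.
Proof.
have := pFrobenius_aut_nat hp 2; rewrite pFrobenius_autE hpm exprS.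
move=> e; apply: (mulfI two_neq0); by rewrite e mulr1.
Qed.

Variable k : nat.
Hypothesis hk : (1 <= k)%N.
Hypothesis hmk : m = (h + k)%N.

Lemma mainK :
  (-1) ^+ k * 4 ^+ (k.*2 - 1) * ((euler h.*2)%:~R : K) =
  c ^+ 2 * Fk (fun s => 16 * s < p)%N
  + c * Fk (fun s => (3 * p < 8 * s) && (16 * s < 7 * p))%N
  + (c + c ^+ 2) * Fk (fun s => (7 * p < 16 * s) && (2 * s < p))%N.
Proof.
have hp2 := hpm; rewrite -mul2n in hp2.
rewrite euler_K // P3 P4.
rewrite (@Fk_ext _ (fun s => 4 * s < p)%N); last by move=> s _ _; rewrite -mul2n; lia.
set Q := Fk (fun s => 4 * s < p)%N.
set g0 := Fk (fun s => 16 * s < p)%N.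
set g6 := Fk (fun s => (3 * p < 8 * s) && (16 * s < 7 * p))%N.
set g7 := Fk (fun s => (7 * p < 16 * s) && (2 * s < p))%N.
set g1 := Fk (fun s => (p < 16 * s) && (8 * s < p))%N.
set H0 := Fk (fun s => 8 * s < p)%N.
set H1 := Fk (fun s => (p < 8 * s) && (4 * s < p))%N.
have hQ : Q = H0 + H1.
  apply: Fk_add => s _ _; [case: ltngtP; lia | lia].
have hH0 : H0 = g0 + g1.
  apply: Fk_add => s _ _; [lia | lia].
have hD0 : H0 = c * (g0 + g7).
  rewrite /H0 doubling; congr (_ * (_ + _)); apply: Fk_ext => s _ _; rewrite -!mul2n; lia.
have hD1 : H1 = c * (g1 + g6).
  rewrite /H1 doubling; congr (_ * (_ + _)); apply: Fk_ext => s _ _; rewrite -!mul2n; lia.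
have hT : c ^+ 2 * g0 + c * g6 + (c + c ^+ 2) * g7 = Q.
  rewrite hQ hD1 (_ : g1 = H0 - g0); last by rewrite hH0; ring.
  rewrite hD0; ring.
rewrite hT.
have hs : ((-1) ^+ k * (-1) ^+ h * (-1) ^+ m : K) = 1.
  rewrite hmk exprD -[(-1) ^+ h]signr_odd -[(-1) ^+ k]signr_odd.
  by case: (odd h); case: (odd k) => /=; ring.
have hpow : (4 : K) ^+ (k.*2 - 1) * 2 * 2 * c * c = 1.
  have -> : (4 : K) = 2 ^+ 2 by rewrite expr2; ring.
  rewrite /c -exprM -exprSr -exprSr -!exprD.
  rewrite (_ : (_ + _ + _)%N = (m.*2 * 2)%N); last by rewrite hmk -!mul2n; lia.
  by rewrite exprM fermat2 expr1n.
transitivity (((-1) ^+ k * (-1) ^+ h * (-1) ^+ m) * ((4 : K) ^+ (k.*2 - 1) * 2 * 2 * c * c) * Q).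
  ring.
by rewrite hs hpow !mul1r.
Qed.
End InK.

Unset Implicit Arguments.

Lemma rat_lt_l (a b p s : nat) : (0 < b)%N ->
  ((a%:R / b%:R) * p%:R < s%:R :> rat) = (a * p < b * s)%N.
Proof.
move=> hb; rewrite mulrAC ltr_pdivrMr ?ltr0n // -!natrM ltr_nat; apply/idP/idP => H; lia.
Qed.

Lemma rat_lt_r (a b p s : nat) : (0 < b)%N ->
  (s%:R < (a%:R / b%:R) * p%:R :> rat) = (b * s < a * p)%N.
Proof.
move=> hb; rewrite mulrAC ltr_pdivlMr ?ltr0n // -!natrM ltr_nat; apply/idP/idP => H; lia.
Qed.


Lemma dvd_of_Fp (p : nat) (z : int) : prime p -> (z%:~R : 'F_p) = 0 -> (p%:Z %| z)%Z.
Proof.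
move=> pp; have hp := pchar_Fp pp.
case: z => n.
  by rewrite /dvdz /= => /eqP; rewrite (natK0 hp).
rewrite NegzE mulrNz => /eqP; rewrite oppr_eq0 /dvdz /=.
by rewrite -[X in X == 0]/((n.+1)%:R : 'F_p) (natK0 hp).
Qed.

Lemma Ssum_K (K : fieldType) p h (x y : rat) :
  ((Ssum p h.*2 x y)%:~R : K) =
  Fk K p h (fun s => (x * p%:R < s%:R) && (s%:R < y * p%:R)).
Proof.
rewrite /Ssum rmorph_sum /Fk big_mkcond /=; apply: eq_bigr => s _.
by case: ifP => _; rewrite ?rmorphXn.
Qed.

Theorem mainTheorem5 (p k : nat) :
  prime p -> (5 <= p)%N -> (1 <= k)%N -> (k <= (p - 3)./2)%N ->
  let t := (p - 1 - k.*2)%N in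
  (p%:Z %| (-1) ^+ k * 4 ^+ (k.*2 - 1) * euler t
      - (4 ^+ t * Ssum p t 0 (1 / 16)
         + 2 ^+ t * Ssum p t (3 / 8) (7 / 16)
         + (2 ^+ t + 4 ^+ t) * Ssum p t (7 / 16) (1 / 2)))%Z.
Proof.
move=> pp p5 k1 kle /=; set t := (p - 1 - k.*2)%N.
have hp := pchar_Fp pp.
set m := p./2.
have hpm : p = m.*2.+1.
  have := even_prime pp; case=> [e|op]; first by rewrite e in p5.
  by rewrite -[LHS]odd_double_half op add1n.
have e3 : (p - 3 = (m - 1).*2)%N by rewrite hpm -!mul2n; lia.
rewrite e3 doubleK in kle.
set h := (m - k)%N.
have h0 : (0 < h)%N by rewrite /h; lia.
have ht : (h.*2.+1 < p)%N by rewrite hpm /h -!mul2n; lia.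
have hmk : m = (h + k)%N by rewrite /h; lia.
have tE : t = h.*2 by rewrite /t /h hpm -!mul2n; lia.
refine (@dvd_of_Fp p _ pp _).
rewrite tE !rmorphB !rmorphD !rmorphM /= !Ssum_K !rmorphXn /= rmorphN1.
rewrite (mainK hp hpm h0 ht k1 hmk).
rewrite (intrD _ (2 ^+ h.*2) (4 ^+ h.*2)) !rmorphXn /=.
have hf := Fk_ext.
rewrite (@Fk_ext _ _ _ h0 (fun s => (0 * p%:R < s%:R :> rat) && (s%:R < 1 / 16 * p%:R)) (fun s => 16 * s < p)%N); last first.
  move=> s s0 _; rewrite mul0r ltr0n s0 /= (_ : (1 / 16 : rat) = 1%:R / 16%:R) // rat_lt_r //; lia.
rewrite (@Fk_ext _ _ _ h0 (fun s => (3 / 8 * p%:R < s%:R :> rat) && (s%:R < 7 / 16 * p%:R))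
   (fun s => (3 * p < 8 * s) && (16 * s < 7 * p))%N); last first.
  by move=> s s0 _; rewrite rat_lt_r // rat_lt_l //; lia.
rewrite (@Fk_ext _ _ _ h0 (fun s => (7 / 16 * p%:R < s%:R :> rat) && (s%:R < 1 / 2 * p%:R))
   (fun s => (7 * p < 16 * s) && (2 * s < p))%N); last first.
  move=> s s0 _; rewrite rat_lt_l // (_ : (1 / 2 : rat) = 1%:R / 2%:R) // rat_lt_r //; lia.
rewrite (_ : ((4 : int)%:~R : 'F_p) = 2 ^+ 2); last by rewrite expr2 -natrM.
rewrite (_ : ((2 : int)%:~R : 'F_p) = 2) // -exprM mulnC exprM.
rewrite /c; ring.
Qed.
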